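(* Let $d\in\mathbb{N}$ and $\xi=(\xi^0,\xi^1,\dots,\xi^d)\in\mathbb{C}^{d+1}$ with $\xi^j\neq\xi^k$ for $j\neq k$. Let $p:\mathbb{C}\to\mathbb{C}$ be a polynomial of degree $d$. Then \[ \|p\|_{T([-1,1])}=\sum_{j=0}^d\Big|\sum_{k=0}^dT(\xi)^j{}_k\,p(\xi^k)\Big|. \]
   Context: $T_m$ is the Chebyshev polynomial with $T_m(\cos z)=\cos(mz)$. For a nonzero polynomial $p$ of one variable, writing uniquely $p(x)=\sum_{j=0}^{\deg p}c_jT_j(x)$, $\|p\|_{T([-1,1])}:=\sum_{j=0}^{\deg p}|c_j|$. For $j,k\in\mathbb{N}_0$: $C^j{}_k:=0$ if $j>k$; for $j\le k$: $C^j{}_k:=2^{1-k}\binom{k}{\frac{k-1}{2}-\frac{j-1}{2}}$ if $k,j$ odd; $C^0{}_k:=2^{-k}\binom{k}{k/2}$ if $k$ even; $C^j{}_k:=2^{1-k}\binom{k}{\frac k2-\frac j2}$ if $k,j$ even and $j\ge2$; $C^j{}_k:=0$ otherwise. For $n\in\mathbb{N}$, $\eta=(\eta^1,\dots,\eta^n)\in\mathbb{C}^n$, $j\in\{0,\dots,n\}$, $k\in\{0,\dots,j\}$, define recursively $a_{j,0}(\eta):=\prod_{\ell=1}^j\eta^\ell$, $a_{j,k}(\eta):=a_{j-1,k-1}(\eta)+\eta^ja_{j-1,k}(\eta)$ for $1\le k\le j-1$, $a_{j,j}(\eta):=1$. For $k\in\{0,\dots,d\}$, let $\xi_{(k)}\in\mathbb{C}^d$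 be the vector obtained from $\xi$ by deleting the entry $\xi^k$ (remaining entries in their original order). Set $L(\xi)^j{}_k:=\frac{a_{d,j}(-\xi_{(k)})}{\prod_{\ell\in\{0,\dots,d\}\setminus\{k\}}(\xi^k-\xi^\ell)}$ and $T(\xi)^j{}_k:=\sum_{\ell=0}^dC^j{}_\ell L(\xi)^\ell{}_k$ for $j,k\in\{0,\dots,d\}$. *)

(* Defs.v *)
(* Complex numbers: an arbitrary numClosedFieldType C
   (covers the complex numbers, e.g. R[i] for R a real closed field). *)
From mathcomp Require Import all_boot all_order all_algebra.
Set Implicit Arguments. Unset Strict Implicit. Unset Printing Implicit Defensive.
Import Order.TTheory GRing.Theory Num.Theory.
Local Open Scope ring_scope.

Fixpoint chebT (C : numClosedFieldType) (n : nat) : {poly C} :=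
  match n with
  | 0 => 1
  | 1 => 'X
  | (m.+1 as n').+1 => 2%:P * 'X * chebT C n' - chebT C m
  end.

Definition cheb_expansion (C : numClosedFieldType) (p : {poly C})
  (c : 'I_(size p) -> C) : Prop :=
  p = \sum_(j < size p) c j *: chebT C j.

Definition Ccoef (C : numClosedFieldType) (j k : nat) : C :=
  if (k < j)%N then 0
  else if odd k && odd j then
    2 * 2 ^- k * ('C(k, (k.-1)./2 - (j.-1)./2))%:R
  else if ~~ odd k && (j == 0%N) then
    2 ^- k * ('C(k, k./2))%:R
  else if ~~ odd k && ~~ odd j && (2 <= j)%N then
    2 * 2 ^- k * ('C(k, k./2 - j./2))%:R
  else 0.

(* a_{j,k}(eta), eta = (eta^1, ..., eta^n) given as a function nat -> C
   (only indices 1..j are used); set to 0 for k > j (undefined in the paper). *)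
Fixpoint acoef (C : numClosedFieldType) (eta : nat -> C) (j k : nat) : C :=
  match j with
  | 0 => if k == 0%N then 1 else 0
  | j'.+1 =>
    if k == 0%N then \prod_(1 <= l < j'.+2) eta l
    else if k == j'.+1 then 1
    else if (k < j'.+1)%N then acoef eta j' k.-1 + eta j'.+1 * acoef eta j' k
    else 0
  end.

(* xi_(k): xi = (xi^0,...,xi^d) with entry xi^k deleted, re-indexed 1..d *)
Definition delete_entry (C : numClosedFieldType) (xi : nat -> C) (k : nat)
  : nat -> C :=
  fun l => if (l.-1 < k)%N then xi l.-1 else xi l.

Definition Lmat (C : numClosedFieldType) (d : nat) (xi : nat -> C) (j k : nat) : C :=
  acoef (fun l => - delete_entry xi k l) d j /
  \prod_(l < d.+1 | (l : nat) != k) (xi k - xi l).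

Definition Tmat (C : numClosedFieldType) (d : nat) (xi : nat -> C) (j k : nat) : C :=
  \sum_(l < d.+1) Ccoef C j l * Lmat d xi l k.

(* Main.v *)
Require Import Defs.
From mathcomp Require Import all_boot all_order all_algebra.
From mathcomp Require Import zify ring lra.
Import Order.TTheory GRing.Theory Num.Theory.
Local Open Scope ring_scope.
Set Implicit Arguments. Unset Strict Implicit.

Section Cheb.
Variable C : numClosedFieldType.

Definition lcT (n : nat) : C := if n == 0%N then 1 else 2 ^+ n.-1.

Lemma chebT_SS m : chebT C m.+2 = 2%:P * 'X * chebT C m.+1 - chebT C m.
Proof. by []. Qed.

Lemma chebT_coef n : (forall i, (n < i)%N -> (chebT C n)`_i = 0) /\ (chebT C n)`_n = lcT n.
Proof.
suff H : forall n, ((forall i, (n < i)%N -> (chebT C n)`_i = 0) /\ (chebT C n)`_n = lcT n) /\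
   ((forall i, (n.+1 < i)%N -> (chebT C n.+1)`_i = 0) /\ (chebT C n.+1)`_n.+1 = lcT n.+1).
  by case: (H n).
elim=> [|m [[IH1 IH2] [IH3 IH4]]].
  split; split.
  - by move=> [|i] //= _; rewrite coefC.
  - by rewrite coefC.
  - by move=> i hi /=; rewrite coefX; case: i hi => [|[|i]].
  - by rewrite /= coefX.
split; first by split.
split.
- move=> i hi; rewrite chebT_SS coefB -mulrA coefCM coefXM.
  case: i hi => [|i] hi //.
  by rewrite IH3 ?IH1 ?mulr0 ?subr0 //; lia.
- rewrite chebT_SS coefB -mulrA coefCM coefXM IH4 IH1 // subr0 /lcT /=.
  by rewrite exprS.
Qed.

Lemma lcT_neq0 n : lcT n != 0.
Proof. rewrite /lcT; case: (n == 0%N); first by rewrite oner_eq0.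
by rewrite expf_neq0 // pnatr_eq0. Qed.

Definition Tz (n : int) : {poly C} := chebT C `|n|%N.

Lemma chebT_rec m : 2%:P * 'X * chebT C m.+1 = chebT C m.+2 + chebT C m.
Proof. by rewrite chebT_SS subrK. Qed.

Lemma chebT_rec0 : 2%:P * 'X * chebT C 0 = chebT C 1 + chebT C 1.
Proof. by rewrite mulr1 /= polyC_natr mulr_natl mulr2n. Qed.

Lemma TzX (n : int) : 2%:P * 'X * Tz n = Tz (n + 1) + Tz (n - 1).
Proof.
rewrite /Tz; case: n => m.
- case: m => [|m].
  + have -> : `|(Posz 0 + 1)%R|%N = 1%N by [].
    have -> : `|(Posz 0 - 1)%R|%N = 1%N by [].
    exact: chebT_rec0.
  + have -> : `|(Posz m.+1 + 1)%R|%N = m.+2 by lia.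
    have -> : `|(Posz m.+1 - 1)%R|%N = m by lia.
    have -> : `|Posz m.+1|%N = m.+1 by lia.
    exact: chebT_rec.
- have -> : `|(Negz m + 1)%R|%N = m by lia.
  have -> : `|(Negz m - 1)%R|%N = m.+2 by lia.
  have -> : `|Negz m|%N = m.+1 by lia.
  by rewrite chebT_rec addrC.
Qed.

Lemma pascal_sum (M : zmodType) (f : nat -> M) k :
  \sum_(i < k.+2) f i *+ 'C(k.+1, i) = \sum_(i < k.+1) (f i + f i.+1) *+ 'C(k, i).
Proof.
rewrite big_ord_recl bin0 mulr1n.
under eq_bigr do rewrite /= binS mulrnDr.
rewrite big_split /=.
under [in RHS]eq_bigr do rewrite mulrnDl.
rewrite big_split /= [in RHS]big_ord_recl bin0 mulr1n -!addrA; congr (_ + _).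
congr (_ + _).
by rewrite big_ord_recr /= bin_small // mulr0n addr0.
Qed.

Lemma expand2X k : (2%:P * 'X) ^+ k = \sum_(i < k.+1) Tz (k%:Z - (2 * i)%N%:Z) *+ 'C(k, i).
Proof.
elim: k => [|k IH]; first by rewrite expr0 big_ord1 /Tz /= mulr1n.
rewrite exprS IH mulr_sumr.
under eq_bigr do rewrite mulrnAr TzX.
rewrite (pascal_sum (fun i => Tz (k.+1%:Z - (2 * i)%N%:Z))).
apply: eq_bigr => i _; congr (_ *+ _); congr (Tz _ + Tz _); lia.
Qed.

Definition Ncnt k j := (\sum_(i < k.+1)
   (if `|(k%:Z - (2 * i)%N%:Z)%R|%N == j then 'C(k, i) else 0))%N.

Lemma regroup k : \sum_(i < k.+1) Tz (k%:Z - (2 * i)%N%:Z) *+ 'C(k, i)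
  = \sum_(j < k.+1) chebT C j *+ Ncnt k j.
Proof.
under [RHS]eq_bigr do rewrite /Ncnt -sumrMnr.
rewrite exchange_big /=; apply: eq_bigr => i _.
have hm : (`|(k%:Z - (2 * i)%N%:Z)%R|%N < k.+1)%N by have := ltn_ord i; lia.
rewrite (bigD1 (Ordinal hm)) //= eqxx big1 ?addr0 // => j hj.
case: eqP => [e|]; last by rewrite mulr0n.
by case/eqP: hj; apply: val_inj => /=.
Qed.

Lemma sum_pt n a (F : nat -> nat) :
  (\sum_(i < n) (if (i : nat) == a then F i else 0) = if a < n then F a else 0)%N.
Proof.
elim: n => [|n IH]; first by rewrite big_ord0 ltn0.
rewrite big_ord_recr /= IH.
case: (eqVneq n a) => [<-|ne].
  by rewrite ltnn ltnSn add0n.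
by repeat case: ifP; move=> *; lia.
Qed.

Lemma Ncnt_eq k j : Ncnt k j =
  (if (j <= k) && ~~ odd (k + j) then
     (if j == 0 then 'C(k, (k - j)./2) else 2 * 'C(k, (k - j)./2)) else 0)%N.
Proof.
set a := ((k - j)./2)%N.
have ha : a = ((k - j)./2)%N by [].
clearbody a; rewrite /Ncnt.
have pw : forall i : 'I_k.+1, (if `|(k%:Z - (2 * i)%N%:Z)%R|%N == j then 'C(k, i) else 0)%N =
   ((if (i : nat) == a then (if (j <= k) && ~~ odd (k + j) then 'C(k, a) else 0) else 0) +
   (if (i : nat) == (k - a)%N then (if (j <= k) && ~~ odd (k + j) && (j != 0) then 'C(k, a) else 0) else 0))%N.
  move=> i; have := ltn_ord i.
  case: (eqVneq (i : nat) a) => [->|nia].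
    by repeat case: ifP; move=> *; lia.
  case: (eqVneq (i : nat) (k - a)%N) => [e|nib].
    have hne : (k - a)%N != a by rewrite -e.
    rewrite e bin_sub; last by lia.
    by repeat case: ifP; move=> *; lia.
  by repeat case: ifP; move=> *; lia.
rewrite (eq_bigr _ (fun i _ => pw i)) big_split /=.
rewrite (sum_pt k.+1 a (fun _ => if (j <= k)%N && ~~ odd (k + j) then 'C(k, a) else 0%N)).
rewrite (sum_pt k.+1 (k - a)%N (fun _ => if (j <= k)%N && ~~ odd (k + j) && (j != 0%N) then 'C(k, a) else 0%N)).
by repeat case: ifP; move=> *; lia.
Qed.

Lemma two_exp_neq0 k : (2 : C) ^+ k != 0.
Proof. by rewrite expf_neq0 // pnatr_eq0. Qed.

Lemma Ccoef_N k j : Ccoef C j k = (Ncnt k j)%:R / 2 ^+ k.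
Proof.
have h2 := two_exp_neq0 k.
rewrite Ncnt_eq /Ccoef.
case: (ltnP k j) => hkj.
  by rewrite /= mul0r.
rewrite /=.
case ok: (odd k); case oj: (odd j) => /=.
- rewrite ifT; last by lia.
  rewrite ifF; last by lia.
  have -> : ((k.-1)./2 - (j.-1)./2 = (k - j)./2)%N by lia.
  by rewrite natrM mulrAC.
- by rewrite ifF ?mul0r //; apply/negbTE; lia.
- have -> : (j == 0%N) = false by apply/negbTE/eqP; lia.
  by rewrite ifF ?mul0r //; apply/negbTE; lia.
- rewrite [in RHS]ifT; last by lia.
  case: (eqVneq j 0%N) => [->|jn0].
    by rewrite subn0 mulrC.
  rewrite ifT; last by lia.
  have -> : (k./2 - j./2 = (k - j)./2)%N by lia.
  by rewrite natrM mulrAC.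
Qed.

Lemma X_expand k : 'X^k = \sum_(j < k.+1) Ccoef C j k *: chebT C j.
Proof.
have h2 := two_exp_neq0 k.
have E := expand2X k.
rewrite regroup exprMn -polyC_exp mul_polyC in E.
have -> : 'X^k = (2 ^+ k)^-1 *: ((2 : C) ^+ k *: 'X^k) by rewrite scalerA mulVf ?scale1r.
rewrite E scaler_sumr; apply: eq_bigr => j _.
by rewrite -scaler_nat scalerA Ccoef_N mulrC.
Qed.

Lemma X_expand_N k N : (k < N)%N -> 'X^k = \sum_(j < N) Ccoef C j k *: chebT C j.
Proof.
move=> hk; rewrite X_expand (big_ord_widen N (fun j => Ccoef C j k *: chebT C j) hk).
rewrite big_mkcond; apply: eq_bigr => j _; case: ifP => // /negbT.
by rewrite -leqNgt => h; rewrite /Ccoef h scale0r.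
Qed.

Definition cc (p : {poly C}) (j : nat) := \sum_(l < size p) Ccoef C j l * p`_l.

Lemma cheb_exist (p : {poly C}) : p = \sum_(j < size p) cc p j *: chebT C j.
Proof.
rewrite -{1}(coefK p) poly_def.
under eq_bigr do rewrite (X_expand_N (ltn_ord _)) scaler_sumr.
rewrite exchange_big /=; apply: eq_bigr => j _.
rewrite /cc scaler_suml; apply: eq_bigr => l _.
by rewrite scalerA mulrC.
Qed.

Lemma cheb_uniq n (a : 'I_n -> C) : \sum_(j < n) a j *: chebT C j = 0 -> forall j, a j = 0.
Proof.
elim: n a => [|n IH] a H j; first by case: j.
rewrite big_ord_recr /= in H.
have hn : a ord_max = 0.
  have := congr1 (fun q : {poly C} => q`_n) H.
  rewrite coefD coef_sum coef0 coefZ (chebT_coef n).2 big1 ?add0r.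
    by move/eqP; rewrite mulf_eq0 (negbTE (lcT_neq0 n)) orbF => /eqP.
  by move=> i _; rewrite coefZ (chebT_coef i).1 ?mulr0.
rewrite hn scale0r addr0 in H.
have IH' := IH (fun i => a (widen_ord (leqnSn n) i)) H.
case: (ltnP j n) => hj.
  by have -> : j = widen_ord (leqnSn n) (Ordinal hj) by apply: val_inj.
by have -> : j = ord_max by apply: val_inj => /=; have := ltn_ord j; lia.
Qed.

Lemma acoef_0 (eta : nat -> C) j : acoef eta j 0 = \prod_(1 <= l < j.+1) eta l.
Proof. by case: j => [|j] //=; rewrite big_geq. Qed.

Lemma acoef_big (eta : nat -> C) j k : (j < k)%N -> acoef eta j k = 0.
Proof.
case: j => [|j] /= h; first by case: k h.
by rewrite ifF ?ifF ?ifF //; apply/negbTE; lia.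
Qed.

Lemma acoef_jj (eta : nat -> C) j : acoef eta j j = 1.
Proof. by case: j => [|j] //=; rewrite eqxx. Qed.

Lemma acoef_poly (eta : nat -> C) j k :
  acoef eta j k = (\prod_(m < j) ('X + (eta m.+1)%:P))`_k.
Proof.
elim: j k => [|j IH] k.
  by rewrite big_ord0 coef1 /=; case: (k == 0%N).
rewrite big_ord_recr /= mulrDr coefD coefMX coefMC -!IH.
case: (eqVneq k 0%N) => [->|k0].
  by rewrite add0r acoef_0 big_nat_recr //= mulrC.
case: (eqVneq k j.+1) => [->|kj].
  by rewrite /= acoef_jj acoef_big ?mul0r ?addr0.
case: (ltnP k j.+1) => hk.
  by rewrite mulrC.
by rewrite !acoef_big ?mul0r ?addr0 //; lia.
Qed.

Lemma prod_lift d (k : 'I_d.+1) (F : nat -> {poly C}) :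
  \prod_(l < d.+1 | (l : nat) != k) F l = \prod_(m < d) F (lift k m).
Proof.
rewrite (reindex_omap (lift k) (unlift k)) /=.
  by apply: eq_bigl => i; rewrite eq_sym neq_bump liftK eqxx.
by move=> i; case: unliftP => [j ->|->] //=; rewrite eqxx.
Qed.

End Cheb.

Section L. Variable C : numClosedFieldType.
Section Lag.
Variables (d : nat) (xi : nat -> C).
Hypothesis hxi : forall j k : nat, (j <= d)%N -> (k <= d)%N -> j != k -> xi j != xi k.

Definition Pk (k : nat) := \prod_(l < d.+1 | (l : nat) != k) ('X - (xi l)%:P).
Definition den (k : nat) := \prod_(l < d.+1 | (l : nat) != k) (xi k - xi l).
Definition lag (k : nat) := Pk k * (den k)^-1%:P.

Lemma Pk_coef (k : 'I_d.+1) j : (Pk k)`_j = acoef (fun l => - delete_entry xi k l) d j.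
Proof.
rewrite acoef_poly /Pk (prod_lift k (fun l => 'X - (xi l)%:P)).
have -> : \prod_(m < d) ('X - (xi (lift k m))%:P) =
  \prod_(m < d) ('X + (- delete_entry xi k m.+1)%:P) :> {poly C}; last by [].
apply: eq_bigr => m _.
rewrite /delete_entry polyCN -pred_Sn.
have -> : (lift k m : nat) = if (m < k)%N then (m : nat) else m.+1.
  by rewrite /lift /= /bump; case: (ltnP m k) => h.
by case: (m < k)%N.
Qed.

Lemma Lmat_lag (k : 'I_d.+1) j : Lmat d xi j k = (lag k)`_j.
Proof. by rewrite /lag coefMC Pk_coef /Lmat. Qed.

Lemma den_neq0 (k : 'I_d.+1) : den k != 0.
Proof.
apply/prodf_neq0 => l hl; rewrite subr_eq0.
have hk : (k <= d)%N by rewrite -ltnS ltn_ord.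
have hl' : (l <= d)%N by rewrite -ltnS ltn_ord.
by apply: (hxi hk hl'); rewrite eq_sym.
Qed.

Lemma lag_eval (k t : 'I_d.+1) : (lag k).[xi t] = ((t : nat) == k)%:R.
Proof.
rewrite /lag hornerM hornerC /Pk horner_prod.
case: (eqVneq (t : nat) k) => [e|ne].
  have -> : t = k by apply: val_inj.
  under eq_bigr do rewrite hornerXsubC.
  by rewrite mulfV ?den_neq0.
by rewrite (bigD1 t) //= hornerXsubC subrr !mul0r.
Qed.

Lemma interp (p : {poly C}) : (size p <= d.+1)%N ->
  p = \sum_(k < d.+1) p.[xi k] *: lag k.
Proof.
move=> hp; apply/eqP; rewrite -subr_eq0; apply/eqP.
apply: (roots_geq_poly_eq0 (rs := [seq xi (val i) | i <- enum 'I_d.+1])).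
- apply/allP => x /mapP [t _ ->]; rewrite /root hornerD hornerN horner_sum.
  under eq_bigr do rewrite hornerZ lag_eval.
  rewrite (bigD1 t) //= eqxx mulr1 big1 ?addr0 ?subrr //.
  move=> i hi; rewrite (_ : ((t : nat) == i) = false) ?mulr0 //.
  by apply/negbTE; rewrite eq_sym; exact: hi.
- rewrite map_inj_uniq ?enum_uniq // => a b e; apply/eqP; apply/negPn/negP => ne.
  have ha : (a <= d)%N by rewrite -ltnS ltn_ord.
  have hb : (b <= d)%N by rewrite -ltnS ltn_ord.
  by move: (hxi ha hb ne); rewrite e eqxx.
- rewrite size_map size_enum_ord; apply/leq_sizeP => j hj.
  rewrite coefB coef_sum (leq_sizeP _ _ hp) // big1 ?subrr // => k _.
  by rewrite coefZ -Lmat_lag /Lmat acoef_big ?mul0r ?mulr0.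
Qed.

Lemma coef_interp (p : {poly C}) l : (size p <= d.+1)%N ->
  p`_l = \sum_(k < d.+1) Lmat d xi l k * p.[xi k].
Proof.
move=> hp; rewrite {1}(interp hp) coef_sum; apply: eq_bigr => k _.
by rewrite coefZ Lmat_lag mulrC.
Qed.
End Lag.
End L.

Unset Implicit Arguments.
Theorem lemma5p16 (C : numClosedFieldType) (d : nat) (xi : nat -> C)
  (hxi : forall j k : nat, (j <= d)%N -> (k <= d)%N -> j != k -> xi j != xi k)
  (p : {poly C}) (hp : size p = d.+1) :
  (exists c : 'I_(size p) -> C, cheb_expansion c) /\
  (forall c : 'I_(size p) -> C, cheb_expansion c ->
     \sum_(j < size p) `|c j| =
     \sum_(j < d.+1) `| \sum_(k < d.+1) Tmat d xi j k * p.[xi k] |).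
Proof.
split.
  by exists (fun j => cc p j); rewrite /cheb_expansion -cheb_exist.
move=> c hc.
have hce : forall j : 'I_(size p), c j = cc p j.
  move=> j; apply/eqP; rewrite -subr_eq0; apply/eqP; move: j.
  apply: cheb_uniq.
  under eq_bigr do rewrite scalerBl.
  by rewrite sumrB -hc -cheb_exist subrr.
under eq_bigr do rewrite hce.
rewrite -(big_mkord xpredT (fun j => `|cc p j|)) hp big_mkord.
apply: eq_bigr => j _; congr `|_|.
rewrite /cc hp.
under [RHS]eq_bigr do rewrite /Tmat mulr_suml.
rewrite exchange_big /=; apply: eq_bigr => l _.
have hp' : (size p <= d.+1)%N by rewrite hp.
rewrite (coef_interp hxi l hp') mulr_sumr; apply: eq_bigr => k _.
by rewrite mulrA.
Qed.
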